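(* Let $\Phi:D_n\to S_n$ be the homomorphism with $\Phi(s_{1'})=s_1$ and $\Phi(s_i)=s_i$ for $1\le i\le n-1$. If $\pi\in D_n$ is written as $\pi = w_{1}^{j_{1}} t_{2}^{i_{2}} w_{2}^{j_{2}} t_{3}^{i_{3}} \cdots w_{n-1}^{j_{n-1}} t_{n}^{i_{n}}$ with $0\le i_k\le k-1$, $0\le j_k\le 1$, then $\Phi(\pi)=t_2^{i_2}\cdot t_3^{i_3}\cdots t_n^{i_n}$, where on the right $t_k=s_1s_2\cdots s_{k-1}\in S_n$.
   Context: $D_n$ ($n\ge 2$) is the Coxeter group with generators $s_{1'},s_1,\dots,s_{n-1}$ and relations $s^2=1$, $(s_i s_{i+1})^3=1$, $(s_is_j)^2=1$ for $|i-j|\ge 2$, $(s_{1'}s_2)^3=1$, $(s_{1'}s_i)^2=1$ for $i\ne 2$. $S_n$ is the symmetric group with Coxeter generators $s_i=(i,i+1)$, $1\le i\le n-1$. In $D_n$, $t_k=s_1s_2\cdots s_{k-1}$ ($2\le k\le n$) and $w_k=s_k s_{k-1}\cdots s_2 s_1 s_{1'} s_2\cdots s_k$ ($1\le k\le n-1$). Every element of $D_n$ has a unique expression of the stated form. *)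

(* Defs.v *)
From mathcomp Require Import all_boot all_fingroup.
Set Implicit Arguments. Unset Strict Implicit. Unset Printing Implicit Defensive.
Local Open Scope group_scope.

(* S_n with n = m.+2 (so n >= 2); points 1..n are encoded by ordinals 0..n-1.
   Coxeter generator s_i = (i, i+1), 1 <= i <= n-1. *)
Definition sS (m i : nat) : 'S_(m.+2) := tperm (inord i.-1) (inord i).

Definition tS (m k : nat) : 'S_(m.+2) := \prod_(1 <= i < k) sS m i.

Section Dn.
Variables (gT : finGroupType) (s1' : gT) (s : nat -> gT).

Definition tD (k : nat) : gT := \prod_(1 <= i < k) s i.

Definition wD (k : nat) : gT :=
  (\prod_(i <- rev (iota 1 k)) s i) * s1' * \prod_(2 <= i < k.+1) s i.

Definition Dn_relations (m : nat) : Prop :=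
  s1' ^+ 2 = 1 /\
  (forall i, (1 <= i <= m.+1)%N -> s i ^+ 2 = 1) /\
  (forall i, (1 <= i)%N -> (i.+1 <= m.+1)%N -> (s i * s i.+1) ^+ 3 = 1) /\
  (forall i j, (1 <= i)%N -> (j <= m.+1)%N -> (i.+2 <= j)%N ->
      (s i * s j) ^+ 2 = 1) /\
  ((2 <= m.+1)%N -> (s1' * s 2) ^+ 3 = 1) /\
  (forall i, (1 <= i <= m.+1)%N -> i != 2 -> (s1' * s i) ^+ 2 = 1).

Definition normal_word (m : nat) (ie je : nat -> nat) : gT :=
  \prod_(1 <= k < m.+2) (wD k ^+ je k * tD k.+1 ^+ ie k.+1).

End Dn.

(* Main.v *)
Require Import Defs.
From mathcomp Require Import all_boot all_fingroup.
Local Open Scope group_scope.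

Lemma morph_seq (aT rT : finGroupType) (D : {group aT}) (f : {morphism D >-> rT})
  (I : eqType) (r : seq I) (F : I -> aT) :
  (forall i, i \in r -> F i \in D) ->
  f (\prod_(i <- r) F i) = \prod_(i <- r) f (F i).
Proof.
move=> H; rewrite big_seq_cond (morph_prod f).
  by rewrite -big_seq_cond.
by move=> i /andP[/H].
Qed.

Lemma wS1 m k : (1 <= k)%N ->
  (\prod_(i <- rev (iota 1 k)) sS m i) * sS m 1 * \prod_(2 <= i < k.+1) sS m i = 1.
Proof.
elim: k => // k IH _; case: k IH => [|k] IH.
  rewrite /= big_geq // big_seq1 mulg1 /sS tperm2 //.
have -> : iota 1 k.+2 = iota 1 k.+1 ++ [:: k.+2] by rewrite -(iotaD 1 k.+1 1) addn1.
rewrite rev_cat /= big_cons big_nat_recr //=.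
move: (IH isT) => /=.
set A := \prod_(i <- _) _; set B := \prod_(_ <= i < _) _ => E.
rewrite -!mulgA (mulgA A) (mulgA (A * _)) E mul1g.
by rewrite /sS tperm2.
Qed.

Theorem mainTheorem4 (m : nat) (gT : finGroupType) (D : {group gT})
  (s1' : gT) (s : nat -> gT)
  (hgen : D :=: <<[set s1'] :|: [set s (val i).+1 | i : 'I_m.+1]>>)
  (hrel : Dn_relations s1' s m)
  (Phi : {morphism D >-> {perm 'I_m.+2}})
  (hPhi1' : Phi s1' = sS m 1)
  (hPhi : forall i, 1 <= i <= m.+1 -> Phi (s i) = sS m i)
  (ie je : nat -> nat)
  (hie : forall k, 2 <= k <= m.+2 -> ie k <= k.-1)
  (hje : forall k, 1 <= k <= m.+1 -> je k <= 1) :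
  Phi (normal_word s1' s m ie je) = \prod_(2 <= k < m.+3) tS m k ^+ ie k.
Proof.
have D1' : s1' \in D by rewrite hgen mem_gen // setU11.
have Ds : forall i, 1 <= i <= m.+1 -> s i \in D.
  move=> i /andP[i1 im]; rewrite hgen mem_gen // inE; apply/orP; right.
  have im' : i.-1 < m.+1 by rewrite prednK.
  apply/imsetP; exists (Ordinal im') => //=.
  by rewrite prednK.
have PtD : forall k, k <= m.+2 -> Phi (tD s k) = tS m k.
  move=> k km; rewrite /tD (@morph_seq _ _ _ Phi) => [|i].
    rewrite /tS big_seq [RHS]big_seq; apply: eq_bigr => i.
    rewrite mem_index_iota => /andP[i1 ik]; apply: hPhi.
    by rewrite i1 -ltnS (leq_trans ik).
  rewrite mem_index_iota => /andP[i1 ik]; apply: Ds.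
  by rewrite i1 -ltnS (leq_trans ik).
have DtD : forall k, k <= m.+2 -> tD s k \in D.
  move=> k km; rewrite /tD big_seq; apply: group_prod => i.
  rewrite mem_index_iota => /andP[i1 ik]; apply: Ds.
  by rewrite i1 -ltnS (leq_trans ik).
have DwD : forall k, 1 <= k <= m.+1 -> wD s1' s k \in D.
  move=> k /andP[k1 km]; rewrite /wD !groupM //.
    rewrite big_seq; apply: group_prod => i.
    rewrite mem_rev mem_iota => /andP[i1 ik]; apply: Ds.
    by rewrite i1 -ltnS (leq_trans ik).
  rewrite big_seq; apply: group_prod => i.
  rewrite mem_index_iota => /andP[i1 ik]; apply: Ds.
  by rewrite (ltnW i1) -ltnS (leq_trans ik).
have PwD : forall k, 1 <= k <= m.+1 -> Phi (wD s1' s k) = 1.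
  move=> k /andP[k1 km]; rewrite /wD.
  have DA : \prod_(i <- rev (iota 1 k)) s i \in D.
    rewrite big_seq; apply: group_prod => i.
    rewrite mem_rev mem_iota => /andP[i1 ik]; apply: Ds.
    by rewrite i1 -ltnS (leq_trans ik).
  have DB : \prod_(2 <= i < k.+1) s i \in D.
    rewrite big_seq; apply: group_prod => i.
    rewrite mem_index_iota => /andP[i1 ik]; apply: Ds.
    by rewrite (ltnW i1) -ltnS (leq_trans ik).
  rewrite !morphM ?groupM // hPhi1' -(@wS1 m k k1); congr (_ * _ * _).
    rewrite (@morph_seq _ _ _ Phi) => [|i]; last first.
      rewrite mem_rev mem_iota => /andP[i1 ik]; apply: Ds.
      by rewrite i1 -ltnS (leq_trans ik).
    rewrite big_seq [RHS]big_seq; apply: eq_bigr => i.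
    rewrite mem_rev mem_iota => /andP[i1 ik]; apply: hPhi.
    by rewrite i1 -ltnS (leq_trans ik).
  rewrite (@morph_seq _ _ _ Phi) => [|i]; last first.
    rewrite mem_index_iota => /andP[i1 ik]; apply: Ds.
    by rewrite (ltnW i1) -ltnS (leq_trans ik).
  rewrite big_seq [RHS]big_seq; apply: eq_bigr => i.
  rewrite mem_index_iota => /andP[i1 ik]; apply: hPhi.
  by rewrite (ltnW i1) -ltnS (leq_trans ik).
rewrite /normal_word (@morph_seq _ _ _ Phi) => [|k]; last first.
  rewrite mem_index_iota => /andP[k1 km].
  by rewrite groupM ?groupX // ?DwD ?DtD // k1.
rewrite (big_add1 _ _ 1) /=.
rewrite big_seq [RHS]big_seq; apply: eq_bigr => k.
rewrite mem_index_iota => /andP[k1 km].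
rewrite morphM ?groupX ?DwD ?DtD ?k1 // !morphX ?DwD ?DtD ?k1 //.
by rewrite PwD ?k1 // expg1n mul1g PtD.
Qed.
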